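(* Let $G$ be a graph that has at least one pair of distinct twin vertices and at least one isolated vertex, and let $T$ be a minimum twin cover of $G$. Then for every $t\ge1$, \[\det(\mu_t(G))=t|T|+\det(G)+t-1.\]
   Context: All graphs are finite and simple. For a graph $G$ with $V(G)=\{v_1,\dots,v_n\}$ and an integer $t\ge1$, the generalized Mycielskian $\mu_t(G)$ has vertex set $\{u_i^s: 1\le i\le n,\ 0\le s\le t\}\cup\{w\}$, where $u_i^0$ is identified with $v_i$. Its edges are: $u_i^0u_j^0$ for each edge $v_iv_j$ of $G$; $u_i^su_j^{s+1}$ and $u_j^su_i^{s+1}$ for each edge $v_iv_j$ of $G$ and each $0\le s<t$; and $u_i^tw$ for all $1\le i\le n$. A set $S\subseteq V(G)$ is a determining set for $G$ if the only automorphism of $G$ fixing every vertex of $S$ is the identity; $\det(G)$ is the minimum size of a determining set. Two vertices are twins if they have the same open neighborhood. A minimum twin cover of a graph is a subset of its vertices of minimum size that contains at least one vertex from every pair of distinct twin vertices; equivalently, it contains all but one vertex of each class of mutually twin vertices. *)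

(* Defs.v *)
From mathcomp Require Import all_boot fingroup perm.
Set Implicit Arguments. Unset Strict Implicit. Unset Printing Implicit Defensive.

Section Graphs.
Variable V : finType.
Variable e : rel V.

Definition simple_graph : Prop := symmetric e /\ irreflexive e.

Definition is_aut (p : {perm V}) : bool :=
  [forall x, forall y, e (p x) (p y) == e x y].

Definition determining (S : {set V}) : bool :=
  [forall p : {perm V}, is_aut p ==> [forall x in S, p x == x] ==> (p == 1%g)].

(* det(G) = minimum size of a determining set (setT is always determining) *)
Definition det_number : nat :=
  #|[arg min_(S < [set: V] | determining S) #|S|]|.

Definition twins (u v : V) : bool := (u != v) && [forall z, e u z == e v z].

Definition twin_cover (S : {set V}) : bool :=
  [forall u, forall v, twins u v ==> (u \in S) || (v \in S)].

Definition min_twin_cover (S : {set V}) : Prop :=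
  twin_cover S /\ forall S' : {set V}, twin_cover S' -> #|S| <= #|S'|.

Definition isolated (v : V) : bool := [forall z, ~~ e v z].

End Graphs.

(* Generalized Mycielskian mu_t(G): vertex Some (s, v) is u_v^s (0 <= s <= t),
   with u_v^0 = v; vertex None is the root w. *)
Definition myc_vertex (V : finType) (t : nat) := option ('I_t.+1 * V).

Definition myc_rel (V : finType) (e : rel V) (t : nat) : rel (myc_vertex V t) :=
  fun a b =>
    match a, b with
    | Some (s, x), Some (r, y) =>
        ((nat_of_ord s == 0) && (nat_of_ord r == 0) && e x y)
        || (e x y && ((s.+1 == r :> nat) || (r.+1 == s :> nat)))
    | Some (s, _), None => nat_of_ord s == t
    | None, Some (r, _) => nat_of_ord r == t
    | None, None => false
    end.
Arguments myc_rel {V} e t.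

(* Main.v *)
Require Import Defs.
From mathcomp Require Import all_boot fingroup perm.
From mathcomp Require Import zify.
Set Implicit Arguments. Unset Strict Implicit. Unset Printing Implicit Defensive.

Section Gen.
Variable V : finType.
Variable e : rel V.
Hypothesis sg : simple_graph e.

Lemma autP (p : {perm V}) : reflect (forall x y, e (p x) (p y) = e x y) (is_aut e p).
Proof.
apply: (iffP forallP) => [H x y| H x]; first by move/forallP: (H x) => /(_ y)/eqP.
by apply/forallP=> y; rewrite H.
Qed.

Lemma aut_inv p : is_aut e p -> is_aut e p^-1%g.
Proof. by move/autP=> H; apply/autP=> x y; rewrite -H !permKV. Qed.

Lemma aut_l (p : {perm V}) x y : is_aut e p -> e (p x) y = e x (p^-1%g y).
Proof. by rewrite -{1}(permKV p y) => /autP ->. Qed.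

Lemma detP (S : {set V}) : reflect (forall p, is_aut e p -> (forall x, x \in S -> p x = x) -> p = 1%g)
  (determining e S).
Proof.
apply: (iffP forallP) => [H p Ha Hf| H p].
  have HS : [forall x in S, p x == x] by apply/forall_inP => x xS; rewrite Hf.
  by move: (H p); rewrite Ha HS => /eqP.
apply/implyP=> Ha; apply/implyP=> /forall_inP Hf; apply/eqP; apply: H => // x xS; exact/eqP/Hf.
Qed.

Lemma det_setT : determining e setT.
Proof.
apply/detP=> p _ H; apply/permP=> x; rewrite H ?inE //; by rewrite perm1.
Qed.

Lemma det_min (S : {set V}) : determining e S -> det_number e <= #|S|.
Proof.
rewrite /det_number; case: arg_minnP => [|S0 _ Hmin]; first exact det_setT.
exact: Hmin.
Qed.

Lemma det_exists : exists S, determining e S /\ #|S| = det_number e.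
Proof.
rewrite /det_number; case: arg_minnP => [|S0 H0 _]; first exact det_setT.
by exists S0.
Qed.

Lemma twin_aut u v : u != v -> (forall z, e u z = e v z) -> is_aut e (tperm u v).
Proof.
case: sg => Hs Hi uv H1.
have H2 : forall z, e z u = e z v by move=> z; rewrite Hs H1 Hs.
apply/autP => x y.
by case: tpermP => [->|->|]; case: tpermP => [->|->|] => *;
  rewrite ?H1 ?H2 ?Hi //; subst; rewrite ?H1 ?H2.
Qed.

Lemma twin_in (S : {set V}) u v : determining e S -> u != v -> (forall z, e u z = e v z) ->
  (u \in S) || (v \in S).
Proof.
move=> /detP HS uv H; apply/negPn/negP; rewrite negb_or => /andP[uS vS].
have E : (tperm u v = 1%g).
  apply: (HS _ (twin_aut uv H)) => x xS; apply: tpermD.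
  - by apply: contraNneq uS => ->.
  - by apply: contraNneq vS => ->.
by move: (tpermL u v); rewrite E perm1 => uv'; move: uv; rewrite uv' eqxx.
Qed.

Lemma aut_iso p x : is_aut e p -> isolated e (p x) = isolated e x.
Proof.
move=> Ha; apply/forallP/forallP => H z.
  by rewrite -(autP _ Ha); apply: H.
by rewrite (aut_l _ _ Ha).
Qed.

Definition hastwin x := [exists y, twins e x y].

Lemma twins_aut p x y : is_aut e p -> twins e x y -> twins e (p x) (p y).
Proof.
move=> Ha /andP[xy /forallP H]; apply/andP; split; first by rewrite (inj_eq perm_inj).
by apply/forallP=> z; rewrite !(aut_l _ _ Ha) H.
Qed.

Lemma aut_hastwin p x : is_aut e p -> hastwin (p x) = hastwin x.
Proof.
move=> Ha; apply/existsP/existsP => [[y Hy]|[y Hy]].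
  exists (p^-1%g y); move: (twins_aut (aut_inv Ha) Hy); by rewrite permK.
by exists (p y); apply: twins_aut.
Qed.

Lemma twinsP x y : reflect (x != y /\ forall z, e x z = e y z) (twins e x y).
Proof.
apply: (iffP andP) => [[xy /forallP H]|[xy H]]; split => //.
  by move=> z; apply/eqP.
by apply/forallP=> z; rewrite H.
Qed.

End Gen.

Section Myc.
Variable V : finType.
Variable e : rel V.
Hypothesis sg : simple_graph e.
Variable t : nat.
Hypothesis t1 : 1 <= t.
Variables u0 v0 i0 : V.
Hypothesis tw0 : twins e u0 v0.
Hypothesis iso0 : isolated e i0.

Local Notation M := (myc_vertex V t).
Local Notation m := (myc_rel e t).

Lemma esy x y : e x y = e y x.
Proof. by case: sg => Hs _; rewrite Hs. Qed.

Lemma isoF x z : isolated e x -> e x z = false.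
Proof. by move/forallP/(_ z)/negbTE. Qed.

Lemma isoF' x z : isolated e z -> e x z = false.
Proof. by rewrite esy; apply: isoF. Qed.

Lemma nisoP x : ~~ isolated e x -> exists y, e x y.
Proof. by move/forallPn => [y]; rewrite negbK; exists y. Qed.

Lemma nisoI x y : e x y -> ~~ isolated e x.
Proof. by move=> H; apply/negP => /forallP /(_ y); rewrite H. Qed.

Lemma myc_sg : simple_graph m.
Proof.
case: sg => Hs Hi; split.
  move=> [[s x]|] [[r y]|] //=; rewrite (Hs x y).
  by case: (e y x); rewrite /= ?andbT ?andbF //; congr (_ || _); [rewrite andbC | rewrite orbC].
by move=> [[s x]|] //=; rewrite Hi /= andbF.
Qed.

Lemma m00 (s r : 'I_t.+1) x y : (s : nat) = 0 -> (r : nat) = 0 ->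
  m (Some (s, x)) (Some (r, y)) = e x y.
Proof. by move=> /= -> ->; rewrite /= andbF orbF. Qed.

Lemma mup (s r : 'I_t.+1) x y : (r : nat) = s.+1 ->
  m (Some (s, x)) (Some (r, y)) = e x y.
Proof. by move=> /= ->; rewrite /= eqxx andbT andbF /=; case: (e x y). Qed.

Lemma mdown (s r : 'I_t.+1) x y : (r : nat) = s.-1 -> e x y ->
  m (Some (s, x)) (Some (r, y)).
Proof.
case: s => [[|s] Hs]; case: r => [r Hr] /= -> Hxy; rewrite Hxy //=.
by rewrite eqxx !orbT.
Qed.

Lemma mSiso (s r : 'I_t.+1) x y : isolated e x -> m (Some (s, x)) (Some (r, y)) = false.
Proof. by move=> H /=; rewrite (isoF _ H) /= andbF. Qed.

Lemma mSN (s : 'I_t.+1) x : m (Some (s, x)) None = (s == t :> nat).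
Proof. by []. Qed.

Lemma mNS (s : 'I_t.+1) x : m None (Some (s, x)) = (s == t :> nat).
Proof. by []. Qed.

Lemma u0v0 : u0 != v0.
Proof. by case/andP: tw0. Qed.

Lemma uniq_nb_class v : (forall a b, m v a -> m v b -> a = b) -> forall z, m v z -> z = None.
Proof.
move=> U z Hz.
case: v U Hz => [[s x]|] U Hz; last first.
  have := U (Some (ord_max, u0)) (Some (ord_max, v0)).
  rewrite !mNS /= eqxx => /(_ isT isT) [] /eqP; by rewrite (negbTE u0v0).
case Hx: (isolated e x).
  by case: z Hz => [[r y]|] //; rewrite mSiso.
have [y Hy] := nisoP (negbT Hx).
exfalso.
have Hm1 : (s.-1 < t.+1)%N by case: s {U Hz} => /= s; lia.
set n1 := Some (@Ordinal t.+1 s.-1 Hm1, y).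
have H1 : m (Some (s, x)) n1.
  by apply: mdown.
case: (ltnP s t) => st.
  have Hp : (s.+1 < t.+1)%N by [].
  have := U n1 (Some (@Ordinal t.+1 s.+1 Hp, y)) H1.
  rewrite mup // => /(_ Hy) [] /= /eqP; by case: (s : nat) => /=; lia.
have := U n1 None H1; rewrite mSN.
have -> : (s == t :> nat) by case: s {U Hz Hm1 n1 H1} st => /= s; lia.
by move/(_ isT).
Qed.

Lemma fixw (p : {perm M}) : is_aut m p -> p None = None.
Proof.
move=> Ha.
set p0 : M := Some (ord_max, i0).
have Hp0 : forall z, m p0 z -> z = None.
  by case => [[r y]|] //; rewrite mSiso.
have U : forall a b, m (p p0) a -> m (p p0) b -> a = b.
  move=> a b; rewrite !(aut_l _ _ Ha) => /Hp0 Ha' /Hp0 Hb'.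
  by rewrite -(permKV p a) -(permKV p b) Ha' Hb'.
apply: (uniq_nb_class U).
by rewrite (autP _ _ Ha) mSN /= eqxx.
Qed.

Lemma lev_pres k : forall (p : {perm M}), is_aut m p -> p None = None ->
  forall (s : 'I_t.+1) x, s + k = t -> ~~ isolated e x ->
  exists x', p (Some (s, x)) = Some (s, x') /\ ~~ isolated e x'.
Proof.
elim/ltn_ind: k => k IH p Ha pN s x skt Hx.
have [y Hy] := nisoP Hx.
case: k IH skt => [|k] IH skt.
  have st : (s : nat) = t by lia.
  have Hm : m (p (Some (s, x))) None.
    by rewrite -pN (autP _ _ Ha) /= st eqxx.
  case Ep : (p (Some (s, x))) Hm => [[r x']|] // Hm.
  have rs : r = s by apply: val_inj; move: Hm; rewrite /= st => /eqP.
  subst r; exists x'; split => //.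
  have Hm1 : (t.-1 < t.+1)%N by lia.
  set q := p (Some (@Ordinal t.+1 t.-1 Hm1, y)).
  have Hq : m (Some (s, x')) q.
    by rewrite -Ep (autP _ _ Ha); apply: mdown => //=; lia.
  case Eq : q Hq => [[r2 y2]|] Hq.
    apply: (@nisoI _ y2); move: Hq => /=; by case: (e x' y2); rewrite ?andbF.
  move: Eq; rewrite /q -pN => /perm_inj //.
have Hs1 : (s.+1 < t.+1)%N by lia.
have [y' [Ey' Hy']] := IH k (ltnSn k) p Ha pN (Ordinal Hs1) y (ltac:(rewrite /=; lia))
   (@nisoI y x (ltac:(by rewrite esy))).
have Hm : m (p (Some (s, x))) (Some (Ordinal Hs1, y')) by rewrite -Ey' (autP _ _ Ha) mup.
case Ep : (p (Some (s, x))) Hm => [[r z]|] Hm; last first.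
  by move: Ep; rewrite -pN => /perm_inj.
have Hz : e z y' by move: Hm => /=; case: (e z y'); rewrite ?andbF.
have : (r : nat) = s \/ (r : nat) = s.+2.
  move: Hm => /=; rewrite Hz /= andbT.
  by case/orP => /eqP; lia.
case => [rs | rs2].
  exists z; split; last exact: nisoI Hz.
  by congr Some; congr pair; apply: val_inj => /=; lia.
have k0 : 0 < k by have := ltn_ord r; lia.
have pinvN : (p^-1)%g None = None by rewrite -{1}pN permK.
have [z'' [E _]] := IH k.-1 (ltac:(lia)) (p^-1)%g (aut_inv Ha) pinvN r z (ltac:(lia)) (nisoI Hz).
move: E; rewrite -Ep permK => [[]] /(congr1 val) /=; lia.
Qed.

Lemma fix_last (p : {perm M}) (Q : pred M) w : (forall v, Q v -> Q (p v)) ->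
  (forall v, Q v -> v != w -> p v = v) -> Q w -> p w = w.
Proof.
move=> HQ Hf Qw; apply/eqP/negPn/negP => Hne.
have := Hf _ (HQ _ Qw) Hne => /perm_inj E.
by rewrite E eqxx in Hne.
Qed.

Lemma pend_class v : [forall z, m v z == (z == None)] ->
  exists2 sx : 'I_t.+1 * V, v = Some sx & (sx.1 == t :> nat) && isolated e sx.2.
Proof.
move/forallP => H; case: v H => [[s x]|] H; last by move: (H None).
exists (s, x) => //=.
have -> /= : (s == t :> nat) by move: (H None) => /= /eqP ->.
apply/negPn/negP => Hx; have [y Hy] := nisoP Hx.
have Hm1 : (t.-1 < t.+1)%N by lia.
have := H (Some (Ordinal Hm1, y)).
rewrite mdown //=.
by move: (H None) => /= /eqP /eqP ->; lia.
Qed.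

Lemma iso_class v : isolated m v ->
  exists2 sx : 'I_t.+1 * V, v = Some sx & (sx.1 != t :> nat) && isolated e sx.2.
Proof.
move/forallP => H; case: v H => [[s x]|] H; last by move: (H (Some (ord_max, i0))) => /=; rewrite eqxx.
exists (s, x) => //=.
have st : (s != t :> nat) by move: (H None).
rewrite st /=.
apply/negPn/negP => Hx; have [y Hy] := nisoP Hx.
have Hs1 : (s.+1 < t.+1)%N by have := ltn_ord s; lia.
by move: (H (Some (Ordinal Hs1, y))); rewrite mup // Hy.
Qed.

Variables (D T : {set V}).
Hypothesis HD : determining e D.
Hypothesis HT : twin_cover e T.

Definition Sup : {set M} := [set v : M | if v is Some (s, x) then
  (if isolated e x then ~~ ((x == i0) && ((s == 0 :> nat) || (s == t :> nat)))
   else if (s == 0 :> nat) then x \in D else x \in T) else false].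

Lemma Sup_det : determining m Sup.
Proof.
apply/detP => p Ha Hf.
have pN := fixw Ha.
have Hlev : forall s x, ~~ isolated e x ->
    exists x', p (Some (s, x)) = Some (s, x') /\ ~~ isolated e x'.
  by move=> s x Hx; apply: (@lev_pres (t - s)) => //; have := ltn_ord s; lia.
pose s0 x := if p (Some (ord0, x)) is Some (_, y) then y else x.
have Hs0 : forall x, ~~ isolated e x ->
    p (Some (ord0, x)) = Some (ord0, s0 x) /\ ~~ isolated e (s0 x).
  by move=> x Hx; have [x' [E Hx']] := Hlev ord0 x Hx; rewrite /s0 E.
pose gf x := if isolated e x then x else s0 x.
have gf_inj : injective gf.
  move=> x y; rewrite /gf; case Hx: (isolated e x); case Hy: (isolated e y) => //.
  - by move=> E; rewrite E (negbTE (Hs0 y (negbT Hy)).2) in Hx.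
  - by move=> E; rewrite -E (negbTE (Hs0 x (negbT Hx)).2) in Hy.
  move=> E; have [E1 _] := Hs0 x (negbT Hx); have [E2 _] := Hs0 y (negbT Hy).
  have : p (Some (ord0, x)) = p (Some (ord0, y)) by rewrite E1 E2 E.
  by move/perm_inj => [].
pose g := perm gf_inj.
have ga : is_aut e g.
  apply/autP => x y; rewrite !permE /gf.
  case Hx: (isolated e x); first by rewrite !(isoF _ Hx).
  case Hy: (isolated e y); first by rewrite !(isoF' _ Hy).
  have [E1 _] := Hs0 x (negbT Hx); have [E2 _] := Hs0 y (negbT Hy).
  by rewrite -(@m00 ord0 ord0 (s0 x) (s0 y)) // -E1 -E2 (autP _ _ Ha) m00.
have g1 : g = 1%g.
  apply: (detP _ _ HD) => // x xD; rewrite permE /gf.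
  case Hx: (isolated e x) => //.
  have [E1 _] := Hs0 x (negbT Hx).
  have : p (Some (ord0, x)) = Some (ord0, x) by apply: Hf; rewrite inE Hx /=.
  by rewrite E1 => [[]].
have L0 : forall x, ~~ isolated e x -> p (Some (ord0, x)) = Some (ord0, x).
  move=> x Hx; have := congr1 (fun q : {perm V} => q x) g1.
  rewrite permE perm1 /gf (negbTE Hx) => E.
  by rewrite (Hs0 x Hx).1 E.
have Lall : forall n (s : 'I_t.+1), (s : nat) = n -> forall x, ~~ isolated e x ->
    p (Some (s, x)) = Some (s, x).
  elim => [|n IH] s sn x Hx.
    have -> : s = ord0 by apply: val_inj.
    exact: L0.
  have Hn : (n < t.+1)%N by have := ltn_ord s; lia.
  have [x' [E Hx']] := Hlev s x Hx.
  have Hz : forall z, e x' z = e x z.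
    move=> z; case Hz: (isolated e z); first by rewrite !(isoF' _ Hz).
    rewrite esy [e x z]esy.
    rewrite -(@mup (Ordinal Hn) s z x') // -E -(IH (Ordinal Hn) erefl z (negbT Hz)).
    by rewrite (autP _ _ Ha) mup.
  have xx : x' = x.
    case: (eqVneq x' x) => // ne.
    have tw : twins e x x'.
      by apply/twinsP; split; [rewrite eq_sym | move=> z; rewrite Hz].
    have sn0 : (s == 0 :> nat) = false by rewrite sn.
    move/forallP: HT => /(_ x) /forallP /(_ x') /implyP /(_ tw) /orP [xT|x'T].
      have := Hf (Some (s, x)) (ltac:(by rewrite inE (negbTE Hx) sn0)).
      by rewrite E => [[]] /eqP; rewrite (negbTE ne).
    have F := Hf (Some (s, x')) (ltac:(by rewrite inE (negbTE Hx') sn0)).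
    have := etrans F (esym E) => /perm_inj [] /eqP; by rewrite (negbTE ne).
  by rewrite E xx.
apply/permP => [[[s x]|]]; rewrite perm1 //.
case Hx: (isolated e x); last by apply: (Lall _ s erefl); rewrite Hx.
case: (boolP ((x == i0) && ((s == 0 :> nat) || (s == t :> nat)))) => Hxs; last first.
  by apply: Hf; rewrite inE Hx.
case/andP: Hxs => /eqP xi0 /orP [s0t|stt]; subst x.
  have -> : s = ord0 by apply: val_inj; apply/eqP.
  apply: (@fix_last p (isolated m)).
  - by move=> v; rewrite (aut_iso _ Ha).
  - move=> v /iso_class [[r y] -> /andP [rt Hy]] ne; apply: Hf.
    rewrite inE Hy (negbTE rt) orbF; apply: contra ne => /andP [/eqP -> r0].
    by apply/eqP; congr Some; congr pair; apply: val_inj; apply/eqP.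
  - apply/forallP => -[[r y]|] /=; last by lia.
    by rewrite (isoF _ iso0) andbF.
have -> : s = ord_max by apply: val_inj; apply/eqP.
have pinvN : (p^-1)%g None = None by rewrite -{1}pN permK.
apply: (@fix_last p [pred v | [forall z, m v z == (z == None)]]).
- move=> v /= /forallP H; apply/forallP => z.
  rewrite (aut_l _ _ Ha) (eqP (H _)).
  case: z => [z|]; last by rewrite pinvN.
  by rewrite /= eqbF_neg; apply/eqP => /(congr1 p); rewrite permKV pN.
- move=> v /pend_class [[r y] -> /andP [rt Hy]] ne; apply: Hf.
  rewrite inE Hy rt orbT andbT; apply: contra ne => /eqP ->.
  by apply/eqP; congr Some; congr pair; apply: val_inj; apply/eqP.
- apply/forallP => -[[r y]|] /=; last by rewrite eqxx.
  by rewrite (isoF _ iso0) andbF.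
Qed.

Definition Iso : {set V} := [set x | isolated e x].

Lemma card_setU_le (T0 : finType) (A B : {set T0}) : #|A :|: B| <= #|A| + #|B|.
Proof. rewrite cardsU; lia. Qed.

Lemma Sup_card : #|Sup| <= (t.+1 * #|Iso| - 2) + #|D :\: Iso| + t * #|T :\: Iso|.
Proof.
pose XI := setX [set: 'I_t.+1] Iso :\: [set (ord0, i0); (ord_max, i0)].
pose X0 := setX [set ord0 : 'I_t.+1] (D :\: Iso).
pose X1 := setX (~: [set ord0 : 'I_t.+1]) (T :\: Iso).
have sub : Sup \subset Some @: (XI :|: X0 :|: X1).
  apply/subsetP => -[[s x]|]; rewrite inE //.
  case Hx: (isolated e x) => H; apply/imsetP; exists (s, x) => //.
    rewrite !inE /= Hx /= andbT.
    rewrite !andbF !orbF; move: H; apply: contra => /orP [] /eqP E; case: E => -> ->; by rewrite eqxx /= ?eqxx ?orbT.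
  case: (eqVneq (s : nat) 0) H => [s0|s0] H.
    by rewrite !inE /= Hx /= H andbF -val_eqE /= s0.
  by move: H; rewrite !inE /= Hx /= andbF -val_eqE /= (negbTE s0).
have c1 := subset_leq_card sub.
have c2 := leq_imset_card Some (XI :|: X0 :|: X1).
have c3 := card_setU_le (XI :|: X0) X1.
have c4 := card_setU_le XI X0.
have eXI : #|XI| = t.+1 * #|Iso| - 2.
  rewrite /XI cardsD cardsX cardsT card_ord.
  have -> : setX [set: 'I_t.+1] Iso :&: [set (ord0, i0); (ord_max, i0)] =
            [set (ord0, i0); (ord_max, i0)].
    apply/setIidPr/subsetP => q; rewrite !inE => /orP [] /eqP -> /=; rewrite ?inE ?iso0 //.
  rewrite cards2.
  have -> : (ord0, i0) != (ord_max, i0) :> 'I_t.+1 * V.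
    rewrite xpair_eqE negb_and -val_eqE /=; apply/orP; left; lia.
  done.
have eX0 : #|X0| = #|D :\: Iso| by rewrite /X0 cardsX cards1 mul1n.
have eX1 : #|X1| = t * #|T :\: Iso| by rewrite /X1 cardsX cardsC1 card_ord.
move: c1 c2 c3 c4; rewrite eXI eX0 eX1 => c1 c2 c3 c4.
apply: (leq_trans c1); apply: (leq_trans c2); apply: (leq_trans c3); lia.
Qed.

Lemma iso_notin (A : {set V}) : determining e A -> #|Iso :\: A| <= 1.
Proof.
move=> HA; apply/card_le1_eqP => x y; rewrite !inE => /andP [xA Hx] /andP [yA Hy].
case: (eqVneq x y) => // xy; exfalso.
have := twin_in sg HA xy (fun z => ltac:(by rewrite (isoF _ Hx) (isoF _ Hy))).
by rewrite (negbTE xA) (negbTE yA).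
Qed.

Lemma fix_lastG (T0 : finType) (p : {perm T0}) (Q : pred T0) w : (forall v, Q v -> Q (p v)) ->
  (forall v, Q v -> v != w -> p v = v) -> Q w -> p w = w.
Proof.
move=> HQ Hf Qw; apply/eqP/negPn/negP => Hne.
have := Hf _ (HQ _ Qw) Hne => /perm_inj E.
by rewrite E eqxx in Hne.
Qed.

Lemma mtw (s : 'I_t.+1) x y : (forall z, e x z = e y z) ->
  forall w, m (Some (s, x)) w = m (Some (s, y)) w.
Proof. by move=> H [[r z]|] //=; rewrite H. Qed.

Lemma mtw_iso (s r : 'I_t.+1) x y : isolated e x -> isolated e y ->
  (s == t :> nat) = (r == t :> nat) -> forall w, m (Some (s, x)) w = m (Some (r, y)) w.
Proof.
move=> Hx Hy H [[r' z]|] //=.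
by rewrite (isoF _ Hx) (isoF _ Hy) !andbF.
Qed.

Definition A0 (S : {set M}) : {set V} :=
  [set x | ~~ isolated e x && ((Some (ord0, x) \in S) ||
     (~~ hastwin e x && [exists s : 'I_t.+1, Some (s, x) \in S]))] :|: (Iso :\ i0).

Lemma A0_det (S : {set M}) : determining m S -> determining e (A0 S).
Proof.
move=> HS; apply/detP => g Ha Hf.
have gI : forall x, isolated e x -> g x = x.
  move=> x Hx; case: (eqVneq x i0) => [->|ne]; last by apply: Hf; rewrite !inE ne Hx orbT.
  apply: (@fix_lastG _ g (isolated e)) => // [v|v Hv nv].
    by rewrite (aut_iso _ Ha).
  by apply: Hf; rewrite !inE nv Hv orbT.
have gtw : forall x, hastwin e x -> forall z, e (g x) z = e x z.
  move=> x /existsP [y /twinsP [xy Hxy]] z.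
  case Hx: (isolated e x); first by rewrite gI.
  have Hy : isolated e y = false.
    by rewrite -Hx; apply: eq_forallb => w; rewrite Hxy.
  have uv : Some (ord0, x) != Some (ord0, y) :> M.
    by rewrite (inj_eq (@Some_inj _)) xpair_eqE eqxx.
  case/orP: (twin_in myc_sg HS uv (mtw ord0 Hxy)) => Hin.
    have gx : g x = x by apply: Hf; rewrite !inE Hx /= Hin.
    by rewrite gx.
  have gy : g y = y by apply: Hf; rewrite !inE Hy /= Hin.
  by rewrite (aut_l _ _ Ha) Hxy -(aut_l _ _ Ha) gy Hxy.
pose h (s : 'I_t.+1) x := if (s == 0 :> nat) || ~~ hastwin e x then g x else x.
have hkey : forall s x z, e (h s x) z = e (g x) z.
  move=> s x z; rewrite /h; case: ifP => // /norP [_ /negbNE Ht].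
  by rewrite gtw.
have hinj : forall s, injective (h s).
  move=> s x y; rewrite /h; case s0: (s == 0 :> nat) => /=; first exact: perm_inj.
  case Hx: (hastwin e x); case Hy: (hastwin e y) => //= E.
  - by move: Hx; rewrite E (aut_hastwin _ Ha) Hy.
  - by move: Hy; rewrite -E (aut_hastwin _ Ha) Hx.
  - exact: perm_inj E.
pose pf (v : M) : M := if v is Some (s, x) then Some (s, h s x) else None.
have pf_inj : injective pf.
  by move=> [[s x]|] [[r y]|] //= [] <- /hinj ->.
pose ph := perm pf_inj.
have pha : is_aut m ph.
  apply/autP => -[[s x]|] [[r y]|]; rewrite !permE //=.
  have E : e (h s x) (h r y) = e x y.
    by rewrite hkey [e (g x) _]esy hkey (autP _ _ Ha) esy.
  by rewrite E.
have ph1 : ph = 1%g.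
  apply: (detP _ _ HS) => // -[[s x]|] Hin; rewrite permE //=.
  congr Some; congr pair; rewrite /h; case: ifP => // H.
  case Hx: (isolated e x); first by rewrite gI.
  apply: Hf; apply/setUP; left; rewrite inE Hx /=.
  case/orP: H => [s0 | nt].
    have -> : (ord0 : 'I_t.+1) = s by apply: val_inj => /=; apply/eqP; rewrite eq_sym.
    by rewrite Hin.
  by apply/orP; right; rewrite nt /=; apply/existsP; exists s.
apply/permP => x; rewrite perm1.
have := congr1 (fun q : {perm M} => q (Some (ord0, x))) ph1.
by rewrite permE perm1 /= /h /= => -[].
Qed.

Lemma fiber_sum (Z : {set 'I_t.+1 * V}) :
  #|Z| = \sum_(s < t.+1) #|[set x | (s, x) \in Z]|.
Proof.
transitivity (\sum_(s < t.+1) \sum_(x | (s, x) \in Z) 1).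
  rewrite pair_big_dep /= -sum1_card; apply: eq_bigl => -[s x] //=.
apply: eq_bigr => s _; rewrite -sum1_card; apply: eq_bigl => x; by rewrite inE.
Qed.

Lemma sum_const_ord n c : \sum_(i < n) c = n * c.
Proof. by rewrite sum_nat_const card_ord. Qed.

Lemma lower (S : {set M}) (T0 : {set V}) : determining m S -> twin_cover e T0 ->
  (forall S', twin_cover e S' -> #|T0| <= #|S'|) ->
  (t.+1 * #|Iso| - 2) + #|A0 S :\: Iso| + t * (#|T0| - #|T0 :&: Iso|) <= #|S|.
Proof.
move=> HS HT0 Tmin.
pose W := [set q : 'I_t.+1 * V | Some q \in S].
have c1 : #|W| <= #|S|.
  rewrite -(card_imset _ (@Some_inj _)); apply: subset_leq_card.
  by apply/subsetP => v /imsetP [q]; rewrite inE => Hq ->.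
pose I2 := [set q : 'I_t.+1 * V | isolated e q.2].
have c2 := cardsID I2 W.
have c3 : t.+1 * #|Iso| - 2 <= #|W :&: I2|.
  have eI2 : #|I2| = t.+1 * #|Iso|.
    have -> : I2 = setX [set: 'I_t.+1] Iso by apply/setP => -[s x]; rewrite !inE.
    by rewrite cardsX cardsT card_ord.
  have := cardsID W I2.
  have le2 : #|I2 :\: W| <= 2.
    pose L := [set q : 'I_t.+1 * V | q.1 == t :> nat].
    have := cardsID L (I2 :\: W).
    have a : #|(I2 :\: W) :&: L| <= 1.
      apply/card_le1_eqP => -[s x] [r y]; rewrite !inE /=.
      move=> /andP [/andP [sW Hx] st] /andP [/andP [rW Hy] rt].
      case: (eqVneq (s, x) (r, y)) => // ne; exfalso.
      have uv : Some (s, x) != Some (r, y) :> M by rewrite (inj_eq (@Some_inj _)).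
      have := twin_in myc_sg HS uv (@mtw_iso s r x y Hx Hy (ltac:(by rewrite st rt))).
      by rewrite (negbTE sW) (negbTE rW).
    have b : #|(I2 :\: W) :\: L| <= 1.
      apply/card_le1_eqP => -[s x] [r y]; rewrite !inE /=.
      move=> /andP [st /andP [sW Hx]] /andP [rt /andP [rW Hy]].
      case: (eqVneq (s, x) (r, y)) => // ne; exfalso.
      have uv : Some (s, x) != Some (r, y) :> M by rewrite (inj_eq (@Some_inj _)).
      have := twin_in myc_sg HS uv (@mtw_iso s r x y Hx Hy (ltac:(by rewrite (negbTE st) (negbTE rt)))).
      by rewrite (negbTE sW) (negbTE rW).
    lia.
  rewrite setIC; lia.
pose Q' := [set q : 'I_t.+1 * V | (q.1 == ord0) || ~~ hastwin e q.2].
have c4 := cardsID Q' (W :\: I2).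
have c5 : #|A0 S :\: Iso| <= #|(W :\: I2) :&: Q'|.
  apply: leq_trans (leq_imset_card snd _); apply: subset_leq_card.
  apply/subsetP => x /setDP [xA0 xnI]; move: xA0 => /setUP [|/setD1P [_ xI']]; last by rewrite xI' in xnI.
  rewrite inE => /andP [Hx /orP [H0 | /andP [nt /existsP [s Hs]]]].
    by apply/imsetP; exists (ord0, x) => //; rewrite !inE /= H0 (negbTE Hx).
  by apply/imsetP; exists (s, x) => //; rewrite !inE /= Hs (negbTE Hx) nt orbT.
have c6 : t * (#|T0| - #|T0 :&: Iso|) <= #|(W :\: I2) :\: Q'|.
  rewrite fiber_sum big_ord_recl.
  rewrite -[X in X <= _]add0n; apply: leq_add => //.
  rewrite -sum_const_ord; apply: leq_sum => i _.
  set F := [set x | _].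
  have cov : twin_cover e (F :|: (T0 :&: Iso)).
    apply/forallP => u; apply/forallP => v; apply/implyP => tw.
    have [uv Huv] := twinsP _ _ _ tw.
    have equ : isolated e u = isolated e v by apply: eq_forallb => w; rewrite Huv.
    case Hu: (isolated e u).
      have Hv : isolated e v by rewrite -equ.
      move/forallP: HT0 => /(_ u) /forallP /(_ v) /implyP /(_ tw) /orP [uT|vT].
        by rewrite !inE uT Hu !orbT.
      by rewrite !inE vT Hv !orbT.
    have Hv : isolated e v = false by rewrite -equ.
    have hu : hastwin e u by apply/existsP; exists v.
    have hv : hastwin e v.
      apply/existsP; exists u; apply/twinsP; split; first by rewrite eq_sym.
      by move=> z; rewrite Huv.
    have uv' : Some (lift ord0 i, u) != Some (lift ord0 i, v) :> M.
      by rewrite (inj_eq (@Some_inj _)) xpair_eqE eqxx.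
    have ln0 : (lift ord0 i == ord0) = false by apply/negbTE; rewrite eq_sym neq_lift.
    case/orP: (twin_in myc_sg HS uv' (mtw _ Huv)) => Hin.
      by rewrite !inE /= hu Hu Hin.
    by rewrite !inE /= hv Hv Hin !orbT.
  have := Tmin _ cov.
  have := card_setU_le F (T0 :&: Iso).
  lia.
lia.
Qed.

End Myc.

Lemma cover_notin (V : finType) (e : rel V) (T : {set V}) : twin_cover e T ->
  #|Iso e :\: T| <= 1.
Proof.
move=> HT; apply/card_le1_eqP => x y; rewrite !inE => /andP [xA Hx] /andP [yA Hy].
case: (eqVneq x y) => // xy; exfalso.
have tw : twins e x y.
  apply/andP; split => //; apply/forallP => z.
  by rewrite (negbTE (forallP Hx z)) (negbTE (forallP Hy z)).
move/forallP: HT => /(_ x) /forallP /(_ y) /implyP /(_ tw).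
by rewrite (negbTE xA) (negbTE yA).
Qed.

Lemma min_cover_iso (V : finType) (e : rel V) (T : {set V}) i0 : isolated e i0 ->
  min_twin_cover e T -> 1 <= #|Iso e :\: T|.
Proof.
move=> iso0 [HT Tmin]; rewrite lt0n; apply/negP => /eqP /cards0_eq /eqP.
rewrite setD_eq0 => sub.
have i0T : i0 \in T by apply: (subsetP sub); rewrite inE.
have cov : twin_cover e (T :\ i0).
  apply/forallP => u; apply/forallP => v; apply/implyP => tw.
  have [uv Huv] := twinsP _ _ _ tw.
  have equ : isolated e u = isolated e v by apply: eq_forallb => w; rewrite Huv.
  case: (eqVneq u i0) => [ui|ui].
    subst u; have vT : v \in T by apply: (subsetP sub); rewrite inE -equ.
    by rewrite !inE eq_sym uv vT orbT.
  case: (eqVneq v i0) => [vi|vi].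
    subst v; have uT : u \in T by apply: (subsetP sub); rewrite inE equ.
    by rewrite !inE ui uT.
  move/forallP: HT => /(_ u) /forallP /(_ v) /implyP /(_ tw).
  by rewrite !inE ui vi.
have := Tmin _ cov.
rewrite (cardsD1 i0 T) i0T; lia.
Qed.

Theorem mainTheorem6 (V : finType) (e : rel V) (T : {set V}) (t : nat) :
  simple_graph e ->
  (exists u v, twins e u v) ->
  (exists v, isolated e v) ->
  min_twin_cover e T ->
  1 <= t ->
  det_number (myc_rel e t) = t * #|T| + det_number e + t - 1.
Proof.
move=> sg [u0 [v0 tw0]] [i0 iso0] HTm t1.
have [HT Tmin] := HTm.
have [D [HD eD]] := det_exists e.
have [S [HS eS]] := det_exists (myc_rel e t).
have up1 := det_min (Sup_det sg t1 tw0 iso0 HD HT).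
have up2 := Sup_card t1 tw0 iso0 HD HT.
have lo1 := lower sg t1 tw0 iso0 HD HT HS HT Tmin.
have lo2 := det_min (A0_det sg iso0 HS).
have f1 := iso_notin sg HD.
have f2 := cardsID D (Iso e).
have f3 := cardsID (Iso e) D.
have f4 := cover_notin HT.
have f5 := min_cover_iso iso0 HTm.
have f6 := cardsID (Iso e) T.
have f7 := cardsID T (Iso e).
have f8 := cardsID (Iso e) (A0 e i0 S).
have f9 : #|A0 e i0 S :&: Iso e| <= #|Iso e :\ i0|.
  apply: subset_leq_card; apply/subsetP => x; rewrite !inE.
  by case: (isolated e x); rewrite /= ?andbF ?andbT //= orbF.
have f10 := cardsD1 i0 (Iso e).
have i0I : i0 \in Iso e by rewrite inE.
rewrite i0I in f10.
rewrite setIC in f2. rewrite setIC in f7.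
move: up1 up2 lo1 lo2 f1 f2 f3 f4 f5 f6 f7 f8 f9 f10.
rewrite -eD -eS.
set k := #|Iso e|.
set dI := #|D :&: Iso e|. set dN := #|D :\: Iso e|.
set tI := #|T :&: Iso e|. set tN := #|T :\: Iso e|.
move=> up1 up2 lo1 lo2 f1 f2 f3 f4 f5 f6 f7 f8 f9 f10.
have E1 : #|T| - tI = tN by lia.
rewrite E1 in lo1.
have ET : #|T| = tI + tN by lia.
have Ek : k = tI + 1 by lia.
rewrite ET.
have Ek2 : t.+1 * k - 2 = t * tI + tI + t - 1 by rewrite Ek; nia.
rewrite Ek2 in up2 lo1.
have f10b : k = 1 + #|Iso e :\ i0| by rewrite f10.
have lo1' : t * tI + tI + t - 1 + #|A0 e i0 S :\: Iso e| + t * tN <= #|S| := lo1.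
have lo2' : #|D| <= #|A0 e i0 S| := lo2.
have f8' : #|A0 e i0 S :&: Iso e| + #|A0 e i0 S :\: Iso e| = #|A0 e i0 S| := f8.
have f9' : #|A0 e i0 S :&: Iso e| <= #|Iso e :\ i0| := f9.
have U : #|S| <= t * tI + tI + t - 1 + dN + t * tN := leq_trans up1 up2.
have f10' : k = 1 + #|Iso e :\ i0| := f10b.
clear lo1 lo2 f8 f9 up1 up2 f10b.
lia.
Qed.
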